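(* Let $H=(U,(A_1,\dots,A_m))$ be a complete harmonic set system with $|U|<m(m-2)$ and $m\ge 51$, such that $H_I=\emptyset$ for every nonconsecutive $I\subseteq[m]$ of size $3$. Then $|U|$ is a nonnegative integer linear combination of $m$, $m+1$, $\binom m2$ and $\frac{(m+1)(m-2)}{2}$.
   Context: For $I\subseteq[m]$, $H_I=\bigcap_{i\in I}A_i$ ($=U$ if $I=\emptyset$). $H$ is complete if $\bigcup_{i=1}^m A_i=U$. The run decomposition of a finite set $I$ of positive integers is the partition of sizes, in nonincreasing order, of the maximal runs of consecutive integers in $I$. $H$ is harmonic if $|H_I|=|H_J|$ whenever $I,J\subseteq[m]$ have the same run decomposition. A set of integers is nonconsecutive if no two distinct elements differ by exactly $1$. *)

(* Defs.v *)
(* Indices [m] = {1..m} are represented by 'I_m = {0..m-1};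
   run decompositions and nonconsecutiveness are shift-invariant. *)
From mathcomp Require Import all_boot.
Set Implicit Arguments. Unset Strict Implicit. Unset Printing Implicit Defensive.

Section SetSystems.
Variables (U : finType) (m : nat) (A : 'I_m -> {set U}).

Definition HI (I : {set 'I_m}) : {set U} := \bigcap_(i in I) A i.

Definition complete : Prop := \bigcup_(i < m) A i = [set: U].

Definition natset (I : {set 'I_m}) : seq nat := [seq val i | i <- enum I].

Definition run_start (S : seq nat) (k : nat) : bool :=
  (k \in S) && ~~ ((0 < k) && (k.-1 \in S)).

Fixpoint run_len (S : seq nat) (k fuel : nat) : nat :=
  match fuel with
  | 0 => 0
  | f.+1 => if k \in S then (run_len S k.+1 f).+1 else 0
  end.

Definition run_decomp (I : {set 'I_m}) : seq nat :=
  let S := natset I in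
  sort geq [seq run_len S k m.+1 | k <- S & run_start S k].

Definition harmonic : Prop :=
  forall I J : {set 'I_m}, run_decomp I = run_decomp J -> #|HI I| = #|HI J|.

Definition nonconsecutive (I : {set 'I_m}) : Prop :=
  forall i j, i \in I -> j \in I -> val i <> (val j).+1.

End SetSystems.

(* Main.v *)
Require Import Defs.
From mathcomp Require Import all_boot zify.

Module P1.
Set Implicit Arguments. Unset Strict Implicit. Unset Printing Implicit Defensive.

Section Main.
Variables (U : finType) (m : nat) (A : 'I_m -> {set U}).

Definition inT (u : U) (k : nat) : bool :=
  [exists i : 'I_m, (val i == k) && (u \in A i)].

Lemma mem_lt u k : inT u k -> k < m.
Proof. by case/existsP=> i /andP[/eqP <- _]; apply: ltn_ord. Qed.

Definition Ts (s : seq nat) : {set U} := [set u | all (inT u) s].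
Definition F s := #|Ts s|.
Definition setOf (s : seq nat) : {set 'I_m} := [set x : 'I_m | val x \in s].

Lemma HI_setOf s : all (fun k => k < m) s -> HI A (setOf s) = Ts s.
Proof.
move=> /allP slt; apply/setP=> u; rewrite /HI /Ts inE; apply/bigcapP/allP.
- move=> H k ks; have km := slt k ks; apply/existsP; exists (Ordinal km).
  by rewrite eqxx /=; apply: H; rewrite inE.
- move=> H i; rewrite inE => iS; have /existsP[j /andP[/eqP ji uj]] := H _ iS.
  by have -> : i = j by apply: val_inj.
Qed.

Lemma natset_sorted (I : {set 'I_m}) : sorted ltn (natset I).
Proof.
rewrite /natset -[enum _](eq_filter (mem_enum _)).
rewrite -(eq_filter (mem_map val_inj _)) -filter_map.
by rewrite (sorted_filter ltn_trans) // unlock val_ord_enum iota_ltn_sorted.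
Qed.

Lemma natset_setOf s : sorted ltn s -> all (fun k => k < m) s ->
  natset (setOf s) = s.
Proof.
move=> ss /allP slt; apply: (irr_sorted_eq ltn_trans ltnn) => //.
  exact: natset_sorted.
move=> k; apply/mapP/idP.
- by case=> x; rewrite mem_enum inE => xs ->.
- move=> ks; exists (Ordinal (slt k ks)) => //; by rewrite mem_enum inE.
Qed.

Definition rd (s : seq nat) : seq nat :=
  sort geq [seq run_len s k m.+1 | k <- s & run_start s k].

Lemma run_decomp_setOf s : sorted ltn s -> all (fun k => k < m) s ->
  run_decomp (setOf s) = rd s.
Proof. by move=> ss sl; rewrite /run_decomp natset_setOf. Qed.

Lemma run_len_out s k f : k \notin s -> run_len s k f = 0.
Proof. by case: f => //= f /negbTE ->. Qed.

Lemma run_len_in s k f : k \in s -> run_len s k f.+1 = (run_len s k.+1 f).+1.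
Proof. by move=> /= ->. Qed.

End Main.

End P1.
Import P1.

Module P2.
Set Implicit Arguments. Unset Strict Implicit. Unset Printing Implicit Defensive.

Ltac dec_step :=
  match goal with
  | |- context [@eq_op _ ?x ?y] =>
      let H := fresh "H" in case: (@eqP nat x y) => H; try (exfalso; lia)
  | |- context [?x <= ?y] =>
      let H := fresh "H" in case: (leqP x y) => H; try (exfalso; lia)
  end.
Ltac solve_rd := rewrite /run_start /=; repeat (rewrite /= ?inE; try dec_step); try by [].
Ltac slv := rewrite /=; repeat (apply/andP; split); try lia; try done.

Section Shapes.
Variable m : nat.
Hypothesis hm : 4 <= m.
Lemma fuelE : m.+1 = (m - 4).+4.+1. Proof. lia. Qed.
Ltac rdt := rewrite /rd fuelE; solve_rd.
Lemma rd1 a : rd m [:: a] = [:: 1].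
Proof. rdt. Qed.
Lemma rd2 a : rd m [:: a; a.+1] = [:: 2].
Proof. rdt. Qed.
Lemma rd11 a c : a.+2 <= c -> rd m [:: a; c] = [:: 1; 1].
Proof. move=> ac; rdt. Qed.
Lemma rd3 a : rd m [:: a; a.+1; a.+2] = [:: 3].
Proof. rdt. Qed.
Lemma rd21 a c : a.+3 <= c -> rd m [:: a; a.+1; c] = [:: 2; 1].
Proof. move=> ac; rdt. Qed.
Lemma rd12 a c : a.+2 <= c -> rd m [:: a; c; c.+1] = [:: 2; 1].
Proof. move=> ac; rdt. Qed.
Lemma rd4 a : rd m [:: a; a.+1; a.+2; a.+3] = [:: 4].
Proof. rdt. Qed.
Lemma rd22 a c : a.+3 <= c -> rd m [:: a; a.+1; c; c.+1] = [:: 2; 2].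
Proof. move=> ac; rdt. Qed.
End Shapes.

End P2.
Import P2.

Module P3.
Set Implicit Arguments. Unset Strict Implicit. Unset Printing Implicit Defensive.

Section Main.
Variables (U : finType) (m : nat) (A : 'I_m -> {set U}).
Hypothesis harm : harmonic A.
Hypothesis nc3 : forall I : {set 'I_m}, nonconsecutive I -> #|I| = 3 -> HI A I = set0.
Hypothesis m51 : 51 <= m.

Notation inT := (inT A).
Notation F := (F A).

Lemma F_rd s t : sorted ltn s -> sorted ltn t ->
  all (fun k => k < m) s -> all (fun k => k < m) t -> rd m s = rd m t -> F s = F t.
Proof.
move=> ss st ls lt e; rewrite /F -!HI_setOf //; apply: harm.
by rewrite !run_decomp_setOf.
Qed.

Lemma card_setOf s : sorted ltn s -> all (fun k => k < m) s -> #|setOf m s| = size s.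
Proof. by move=> ss ls; rewrite cardE -(size_map val) -/(natset _) natset_setOf. Qed.

Lemma alpha u i j k : i.+2 <= j -> j.+2 <= k -> inT u i -> inT u j -> inT u k -> False.
Proof.
move=> ij jk ui uj uk; have km := mem_lt uk.
have ss : sorted ltn [:: i; j; k] by slv.
have ls : all (fun x => x < m) [:: i; j; k] by slv.
have := nc3 (I := setOf m [:: i; j; k]).
rewrite card_setOf // HI_setOf // => /(_ _ erefl) H.
have : u \in Ts A [:: i; j; k] by rewrite inE /= ui uj uk.
rewrite H ?inE //.
move=> x y; rewrite !inE => /or3P hx /or3P hy.
by case: hx => /eqP ->; case: hy => /eqP ->; lia.
Qed.

Lemma F0 s i j k : i.+2 <= j -> j.+2 <= k -> i \in s -> j \in s -> k \in s -> F s = 0.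
Proof.
move=> ij jk iS jS kS; apply/eqP; rewrite cards_eq0; apply/eqP/setP => u.
rewrite inE [RHS]inE; apply/negP => /allP H.
exact: (alpha ij jk (H _ iS) (H _ jS) (H _ kS)).
Qed.

Definition h1 := F [:: 0].
Definition h2 := F [:: 0; 1].
Definition h11 := F [:: 0; 2].
Definition h3 := F [:: 0; 1; 2].
Definition h21 := F [:: 0; 1; 3].
Definition h4 := F [:: 0; 1; 2; 3].
Definition h22 := F [:: 0; 1; 3; 4].

Lemma m4 : 4 <= m. Proof. lia. Qed.

Lemma F1 a : a < m -> F [:: a] = h1.
Proof. by move=> am; apply: F_rd; [slv|slv|slv|slv|]; rewrite !rd1 ?m4. Qed.
Lemma F2 a : a.+1 < m -> F [:: a; a.+1] = h2.
Proof. by move=> am; apply: F_rd; [slv|slv|slv|slv|]; rewrite !rd2 ?m4. Qed.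
Lemma F11 a c : a.+2 <= c -> c < m -> F [:: a; c] = h11.
Proof. by move=> ac cm; apply: F_rd; [slv|slv|slv|slv|]; rewrite !rd11 ?m4. Qed.
Lemma F3 a : a.+2 < m -> F [:: a; a.+1; a.+2] = h3.
Proof. by move=> am; apply: F_rd; [slv|slv|slv|slv|]; rewrite !rd3 ?m4. Qed.
Lemma F21 a c : a.+3 <= c -> c < m -> F [:: a; a.+1; c] = h21.
Proof. by move=> ac cm; apply: F_rd; [slv|slv|slv|slv|]; rewrite !rd21 ?m4. Qed.
Lemma F12 a c : a.+2 <= c -> c.+1 < m -> F [:: a; c; c.+1] = h21.
Proof. by move=> ac cm; apply: F_rd; [slv|slv|slv|slv|]; rewrite rd12 ?rd21 ?m4. Qed.
Lemma F4 a : a.+3 < m -> F [:: a; a.+1; a.+2; a.+3] = h4.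
Proof. by move=> am; apply: F_rd; [slv|slv|slv|slv|]; rewrite !rd4 ?m4. Qed.
Lemma F22 a c : a.+3 <= c -> c.+1 < m -> F [:: a; a.+1; c; c.+1] = h22.
Proof. by move=> ac cm; apply: F_rd; [slv|slv|slv|slv|]; rewrite !rd22 ?m4. Qed.

End Main.

End P3.
Import P3.

Module P4.
Set Implicit Arguments. Unset Strict Implicit. Unset Printing Implicit Defensive.

Section Part.
Variables (U : finType) (m : nat) (A : 'I_m -> {set U}).
Notation inT := (inT A).
Notation F := (F A).
Notation Ts := (Ts A).

Definition none u lo hi := all (fun k => ~~ inT u k) (iota lo (hi - lo)).

Lemma none_nil u lo hi : hi <= lo -> none u lo hi.
Proof. by move=> h; rewrite /none (_ : hi - lo = 0) //; lia. Qed.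

Lemma none_lo u lo hi : lo < hi -> none u lo hi = ~~ inT u lo && none u lo.+1 hi.
Proof. by move=> h; rewrite /none (_ : hi - lo = (hi - lo.+1).+1) //; lia. Qed.

Lemma none_hi u lo hi : lo <= hi -> none u lo hi.+1 = none u lo hi && ~~ inT u hi.
Proof.
move=> h; rewrite /none (_ : hi.+1 - lo = (hi - lo) + 1); last by lia.
by rewrite iotaD all_cat /= (_ : lo + (hi - lo) = hi) ?andbT //; lia.
Qed.

Lemma noneP u lo hi : reflect (forall k, lo <= k < hi -> ~~ inT u k) (none u lo hi).
Proof.
apply: (iffP allP) => H k.
- by move=> hk; apply: H; rewrite mem_iota; lia.
- by rewrite mem_iota => hk; apply: H; lia.
Qed.

Lemma card_split (Q : {set U}) (p b : pred U) :
  #|[set u in Q | p u]| = #|[set u in Q | p u && b u]| + #|[set u in Q | p u && ~~ b u]|.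
Proof.
rewrite -(cardsID [set u | b u] [set u in Q | p u]); congr (_ + _); apply: eq_card => u;
by rewrite !inE; case: (u \in Q); case: (p u); case: (b u).
Qed.

Lemma part_left (Q : {set U}) hi t : t <= hi ->
  #|[set u in Q | none u t hi]| =
  #|[set u in Q | none u 0 hi]| + \sum_(0 <= j < t) #|[set u in Q | inT u j && none u j.+1 hi]|.
Proof.
elim: t => [|t IH] th; first by rewrite big_geq // addn0.
rewrite big_nat_recr //= addnA -IH; last by lia.
rewrite (card_split Q (fun u => none u t.+1 hi) (inT^~ t)) addnC; congr (_ + _); apply: eq_card => u;
rewrite !inE ?(none_lo u (lo := t) (hi := hi)) //.
- by case: (inT u t); rewrite ?andbF ?andbT.
- by case: (inT u t); rewrite ?andbF ?andbT.
Qed.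

Lemma part_right (Q : {set U}) lo t : lo <= t ->
  #|Q| = #|[set u in Q | none u lo t]| + \sum_(lo <= k < t) #|[set u in Q | inT u k && none u lo k]|.
Proof.
elim: t => [|t IH] th.
  have -> : lo = 0 by lia.
  by rewrite big_geq // addn0; apply: eq_card => u; rewrite !inE none_nil ?andbT.
case: (ltnP t lo) => [tlo|lot].
  have -> : lo = t.+1 by lia.
  by rewrite big_geq // addn0; apply: eq_card => u; rewrite !inE none_nil ?andbT.
rewrite big_nat_recr //= IH // addnA addnAC; congr (_ + _).
rewrite (card_split Q (fun u => none u lo t) (inT^~ t)) addnC; congr (_ + _); apply: eq_card => u;
rewrite !inE ?(@none_hi u lo t lot); by case: (inT u t); rewrite ?andbF ?andbT.
Qed.

About none_hi.
End Part.

End P4.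
Import P4.

Module P5.
Set Implicit Arguments. Unset Strict Implicit. Unset Printing Implicit Defensive.

Definition NatAlgStmt : Prop := forall m k1 k2 k3 k4 k9 kp1 k2m k2m1 C2 C3 n h1 h2 h11 h3 h21 h4 h22 a b w g0 M5 s1 s2 E X2 X3 R2 R3 R4 Y2 Y3 Z1 Z2 Z3 q  : nat,
(9 <= m)%N ->
  k1 = (m - 1)%N -> k2 = (m - 2)%N -> k3 = (m - 3)%N -> k4 = (m - 4)%N -> k9 = (m - 9)%N ->
  kp1 = (m + 1)%N -> k2m = (2 * m)%N -> k2m1 = (2 * m + 1)%N ->
  (C2 + C2 = m * k1)%N -> (C3 + C3 = k3 * k4)%N ->
  (a + h3 = h11)%N -> (b + 2 * h21 = h11 + h4)%N -> (w + 2 * h21 = h11 + h22)%N ->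
  (n + (k1 * h2 + k2 * a + k3 * b + C3 * w) = m * h1)%N ->
  (g0 + (h2 + a + b + k4 * w) = h1)%N ->
  (M5 + (h2 + a + b + 2 * w) = h1)%N ->
  (E + (h3 + X2 + 3 * X3) = h2)%N -> (X2 + h4 = h21)%N -> (X3 + h22 = h21)%N ->
  (M5 = s1 + E + R2 + R3 + k9 * R4)%N -> (R2 + Y2 = a)%N -> (Y2 + h4 = h21)%N -> (R3 + Y3 = b)%N -> (Y3 + h22 = h21)%N ->
  (R4 + Y3 = w)%N ->
  (E = s2 + Z1 + Z2 + k9 * Z3)%N -> (Z1 + h4 = h3)%N -> (Z2 + h4 = h21)%N -> (Z3 + h22 = h21)%N ->
  (q + 2 * h22 = h21)%N ->
  (n + kp1 * w = m * s1 + kp1 * s2 + C2 * w + k2m * q + k2m1 * h22)%N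
  /\ (g0 + w = s1 + s2 + q + h22)%N.

Definition FinStmt : Prop := forall m n s1 s2 w q y g0  : nat,
51 <= m -> n < m * (m - 2) ->
  n + (m+1) * w = m * s1 + (m+1) * s2 + 'C(m, 2) * w + 2 * m * q + (2 * m+1) * y ->
  g0 + w = s1 + s2 + q + y ->
  exists a b c d : nat,
    n = a * m + b * m.+1 + c * 'C(m, 2) + d * ((m.+1 * (m - 2)) %/ 2).

Section Main.
Variables (U : finType) (m : nat) (A : 'I_m -> {set U}).
Hypothesis harm : harmonic A.
Hypothesis nc3 : forall I : {set 'I_m}, nonconsecutive I -> #|I| = 3 -> HI A I = set0.
Hypothesis m51 : 51 <= m.

Notation inT := (inT A).
Notation F := (F A).
Notation Ts := (Ts A).
Notation none := (none A).
Notation part_left := (P4.part_left A).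
Notation part_right := (P4.part_right A).
Notation alpha := (P3.alpha nc3 m51).
Notation F0 := (P3.F0 nc3 m51).
Notation F1 := (P3.F1 harm m51).
Notation F2 := (P3.F2 harm m51).
Notation F11 := (P3.F11 harm m51).
Notation F3 := (P3.F3 harm m51).
Notation F21 := (P3.F21 harm m51).
Notation F12 := (P3.F12 harm m51).
Notation F4 := (P3.F4 harm m51).
Notation F22 := (P3.F22 harm m51).
Notation h1 := (P3.h1 A). Notation h2 := (P3.h2 A). Notation h11 := (P3.h11 A).
Notation h3 := (P3.h3 A). Notation h21 := (P3.h21 A). Notation h4 := (P3.h4 A).
Notation h22 := (P3.h22 A).

Ltac bcase := repeat match goal with
  | |- context [P1.inT A ?u ?k] => case: (P1.inT A u k)
  | |- context [P4.none A ?u ?a ?b] => case: (P4.none A u a b)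
  | |- context [?u \in ?Q] => case: (u \in Q)
  end.

Lemma FQ S s : #|[set u in Ts S | all (inT u) s]| = F (S ++ s).
Proof. by apply: eq_card => u; rewrite !inE all_cat. Qed.

Lemma FQ' S s : #|[set u in Ts S | all (inT u) s]| = F (s ++ S).
Proof. by apply: eq_card => u; rewrite !inE all_cat andbC. Qed.

Lemma none1 u j : none u j j.+1 = ~~ inT u j.
Proof. by rewrite /P4.none subSnn /= andbT. Qed.

Lemma none_gap u j i : j.+3 <= i -> inT u j -> inT u i ->
  none u j.+1 i = ~~ inT u j.+1 && ~~ inT u i.-1.
Proof.
move=> ji uj ui; apply/noneP/andP.
- by move=> H; split; apply: H; lia.
- case=> h1 h2 k hk; apply/negP => uk.
  case: (k =P j.+1) => [ek|nk]; first by rewrite -ek uk in h1.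
  case: (k =P i.-1) => [ek|nk']; first by rewrite -ek uk in h2.
  apply: (alpha (u:=u) (i:=j) (j:=k) (k:=i)) => //; lia.
Qed.

Lemma gap2 (Q : {set U}) j :
  #|[set u in Q | all (inT u) [:: j; j.+2] && none u j.+1 j.+2]| +
  #|[set u in Q | all (inT u) [:: j; j.+1; j.+2]]| = #|[set u in Q | all (inT u) [:: j; j.+2]]|.
Proof.
rewrite [RHS](card_split _ _ (inT^~ j.+1)) addnC; congr (_ + _); apply: eq_card => u;
by rewrite !inE ?none1 /=; bcase.
Qed.

Lemma gap3 (Q : {set U}) j i : j.+3 <= i ->
  #|[set u in Q | all (inT u) [:: j; i] && none u j.+1 i]| +
  #|[set u in Q | all (inT u) [:: j; j.+1; i]]| + #|[set u in Q | all (inT u) [:: j; i.-1; i]]| =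
  #|[set u in Q | all (inT u) [:: j; i]]| + #|[set u in Q | all (inT u) [:: j; j.+1; i.-1; i]]|.
Proof.
move=> ji.
rewrite [#|[set u in Q | all (inT u) [:: j; i]]|](card_split _ _ (inT^~ j.+1)).
rewrite [#|[set u in Q | all (inT u) [:: j; i] && ~~ inT u j.+1]|](card_split _ _ (inT^~ i.-1)).
rewrite [#|[set u in Q | all (inT u) [:: j; i.-1; i]]|](card_split _ _ (inT^~ j.+1)).
have e1 : #|[set u in Q | all (inT u) [:: j; i] && none u j.+1 i]| =
          #|[set u in Q | all (inT u) [:: j; i] && ~~ inT u j.+1 && ~~ inT u i.-1]|.
  apply: eq_card => u; rewrite !inE /=.
  case uj: (inT u j); case ui: (inT u i); rewrite ?andbF ?andbT //=.
  by rewrite none_gap // andbA.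
have e2 : #|[set u in Q | all (inT u) [:: j; j.+1; i]]| =
          #|[set u in Q | all (inT u) [:: j; i] && inT u j.+1]|.
  by apply: eq_card => u; rewrite !inE /=; bcase.
have e3 : #|[set u in Q | all (inT u) [:: j; i.-1; i] && inT u j.+1]| =
          #|[set u in Q | all (inT u) [:: j; j.+1; i.-1; i]]|.
  by apply: eq_card => u; rewrite !inE /=; bcase.
have e4 : #|[set u in Q | all (inT u) [:: j; i.-1; i] && ~~ inT u j.+1]| =
          #|[set u in Q | all (inT u) [:: j; i] && ~~ inT u j.+1 && inT u i.-1]|.
  by apply: eq_card => u; rewrite !inE /=; bcase.
rewrite e1 e2 e3 e4; lia.
Qed.

Definition G0 j i := #|[set u in Ts [::] | all (inT u) [:: j; i] && none u j.+1 i]|.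

Lemma G0_1 j : j.+1 < m -> G0 j j.+1 = h2.
Proof.
move=> jm; rewrite /G0 -(F2 jm) -(FQ [::]).
by apply: eq_card => u; rewrite !inE none_nil ?andbT.
Qed.

Lemma G0_2 j : j.+2 < m -> G0 j j.+2 + h3 = h11.
Proof.
move=> jm; rewrite /G0 -(F3 jm) -(F11 (a:=j) (c:=j.+2)) // -(FQ [::]) -(FQ [::]).
exact: gap2.
Qed.

Lemma G0_3 j : j.+3 < m -> G0 j j.+3 + 2 * h21 = h11 + h4.
Proof.
move=> jm; have := gap3 (Ts [::]) (j := j) (i := j.+3) (leqnn _).
rewrite !FQ !cat0s (F21 (a:=j) (c:=j.+3)) ?(F12 (a:=j) (c:=j.+2)) ?(F11 (a:=j) (c:=j.+3)) ?F4 //; try lia.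
rewrite /G0; lia.
Qed.

Lemma G0_4 j k : j.+3 <= k -> k.+1 < m -> G0 j k.+1 + 2 * h21 = h11 + h22.
Proof.
move=> jk km; have := gap3 (Ts [::]) (j := j) (i := k.+1) ltac:(lia).
rewrite !FQ !cat0s (F21 (a:=j) (c:=k.+1)) ?(F12 (a:=j) (c:=k)) ?(F11 (a:=j) (c:=k.+1)) ?F22 //; try lia.
rewrite /G0; lia.
Qed.

Definition M t := #|[set u in Ts [:: t] | none u 0 t]|.
Definition PS t := \sum_(0 <= j < t) G0 j t.
Definition a := G0 0 2.
Definition b := G0 0 3.
Definition w := G0 0 4.

Lemma M_PS t : t < m -> M t + PS t = h1.
Proof.
move=> tm; have := part_left (Ts [:: t]) (hi:=t) (t:=t) (leqnn t).
have -> : #|[set u in Ts [:: t] | none u t t]| = h1.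
  rewrite -(F1 tm); apply: eq_card => u; by rewrite !inE none_nil ?andbT.
move=> ->; rewrite /M /PS; congr (_ + _); apply: eq_bigr => j _.
by apply: eq_card => u; rewrite !inE /=; bcase.
Qed.

Lemma a_val : a + h3 = h11. Proof. by apply: G0_2; lia. Qed.
Lemma b_val : b + 2 * h21 = h11 + h4. Proof. by apply: G0_3; lia. Qed.
Lemma w_val : w + 2 * h21 = h11 + h22. Proof. by apply: (G0_4 (j:=0) (k:=3)); lia. Qed.

Lemma PS_val t : 3 <= t -> t < m -> PS t = h2 + a + b + (t - 3) * w.
Proof.
case: t => [|[|[|k]]] // _ km.
have -> : k.+3 - 3 = k by lia.
rewrite /PS (big_cat_nat (n := k)) //=; last by lia.
rewrite [X in _ + X = _]big_ltn; last by lia.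
rewrite [X in _ + (_ + X) = _]big_ltn; last by lia.
rewrite [X in _ + (_ + (_ + X)) = _]big_ltn; last by lia.
rewrite [X in _ + (_ + (_ + (_ + X))) = _]big_geq // addn0.
have -> : G0 k k.+3 = b by have := G0_3 (j:=k) km; have := b_val; lia.
have -> : G0 k.+1 k.+3 = a by have := G0_2 (j:=k.+1) km; have := a_val; lia.
rewrite G0_1 //.
rewrite (eq_big_nat _ _ (F2 := fun => w)); last first.
  move=> j /andP[_ jk]; have := G0_4 (j:=j) (k:=k.+2) ltac:(lia) km; have := w_val; lia.
rewrite sum_nat_const_nat subn0.
move: (k * w) => x; lia.
Qed.

Lemma PS0 : PS 0 = 0. Proof. by rewrite /PS big_geq. Qed.
Lemma PS1 : PS 1 = h2. Proof. rewrite /PS big_nat1; apply: G0_1; lia. Qed.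
Lemma PS2 : PS 2 = h2 + a.
Proof. rewrite /PS big_ltn; last by []. rewrite big_nat1 G0_1; last by lia. by rewrite addnC. Qed.

Lemma C2x k : 2 * 'C(k, 2) = k * (k - 1).
Proof. elim: k => // k IH; rewrite binS bin1 mulnDr IH; case: k {IH} => //= k; nia. Qed.

Lemma sumPS : \sum_(0 <= t < m) PS t =
  (m - 1) * h2 + (m - 2) * a + (m - 3) * b + 'C(m - 3, 2) * w.
Proof.
rewrite big_ltn; last by lia.
rewrite big_ltn; last by lia.
rewrite big_ltn; last by lia.
rewrite PS0 PS1 PS2.
rewrite (eq_big_nat _ _ (F2 := fun t => (h2 + a + b) + (t - 3) * w)); last first.
  by move=> t /andP[t3 tm]; rewrite PS_val.
rewrite big_split /= sum_nat_const_nat -big_distrl /=.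
have -> : \sum_(3 <= i < m) (i - 3) = 'C(m - 3, 2).
  rewrite -(add0n 3) big_addn -bin2_sum; apply: eq_big_nat => i _; by rewrite addnK.

have e1 : m - 1 = (m - 3) + 2 by lia.
have e2 : m - 2 = (m - 3) + 1 by lia.
rewrite e1 e2 !mulnDl; move: (m - 3) ('C(_, 2)) => z c; lia.
Qed.

Lemma n_sum : (forall u : U, exists i : 'I_m, u \in A i) -> #|U| = \sum_(0 <= k < m) M k.
Proof.
move=> cov.
have := part_right [set: U] (lo := 0) (t := m) (leq0n _).
rewrite cardsT => ->.
have -> : #|[set u in [set: U] | none u 0 m]| = 0.
  apply/eqP; rewrite cards_eq0; apply/eqP/setP => u; rewrite !inE.
  have [i ui] := cov u; apply/negP => /noneP H.
  have : inT u i by apply/existsP; exists i; rewrite eqxx.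
  by apply/negP/H; rewrite ltn_ord.
rewrite add0n; apply: eq_bigr => k _; apply: eq_card => u; by rewrite !inE /=; bcase.
Qed.

Lemma n_val : (forall u : U, exists i : 'I_m, u \in A i) ->
  #|U| + ((m - 1) * h2 + (m - 2) * a + (m - 3) * b + 'C(m - 3, 2) * w) = m * h1.
Proof.
move=> cov; rewrite (n_sum cov) -sumPS -big_split /=.
rewrite (eq_big_nat _ _ (F2 := fun => h1)); last by move=> t /andP[_ tm]; rewrite M_PS.
by rewrite sum_nat_const_nat subn0.
Qed.

Lemma noprev5 u k : 7 <= k -> inT u 5 -> inT u k -> none u 0 5 = ~~ inT u 4.
Proof.
move=> k7 u5 uk; apply/noneP/idP.
- by move=> H; apply: H.
- move=> n4 j hj; apply/negP => uj.
  case: (j =P 4) => [e|ne]; first by rewrite -e uj in n4.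
  by apply: (alpha (u:=u) (i:=j) (j:=5) (k:=k)) => //; lia.
Qed.

Lemma noprev_auto u k : 8 <= k -> inT u 6 -> inT u k -> none u 0 5.
Proof.
move=> k8 u6 uk; apply/noneP => j hj; apply/negP => uj.
by apply: (alpha (u:=u) (i:=j) (j:=6) (k:=k)) => //; lia.
Qed.

Lemma sum5 (f : nat -> nat) : \sum_(0 <= j < 5) f j = f 0 + (f 1 + (f 2 + (f 3 + f 4))).
Proof. by rewrite /index_iota /= !big_cons big_nil addn0. Qed.

Definition E := #|[set u in Ts [:: 5; 6] | none u 0 5]|.
Definition Gc j := #|[set u in Ts [:: 6] | all (inT u) [:: j; 5] && none u j.+1 5]|.

Lemma E_sum : E + (Gc 0 + (Gc 1 + (Gc 2 + (Gc 3 + Gc 4)))) = h2.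
Proof.
have := part_left (Ts [:: 5; 6]) (hi:=5) (t:=5) (leqnn 5).
have -> : #|[set u in Ts [:: 5; 6] | none u 5 5]| = h2.
  rewrite -(F2 (a:=5) ltac:(lia)).
  by apply: eq_card => u; rewrite !inE none_nil ?andbT.
move=> ->; rewrite /E; congr (_ + _).
rewrite sum5.
by congr (_ + (_ + (_ + (_ + _)))); apply: eq_card => u; rewrite !inE /=; bcase.
Qed.

Lemma Gc4 : Gc 4 = h3.
Proof.
rewrite /Gc -(F3 (a:=4) ltac:(lia)).
rewrite -(FQ' [:: 6] [:: 4; 5]).
by apply: eq_card => u; rewrite !inE none_nil ?andbT.
Qed.

Lemma Gc3 : Gc 3 + h4 = h21.
Proof.
have := gap2 (Ts [:: 6]) 3.
rewrite !FQ' (F4 (a:=3)) ?(F12 (a:=3) (c:=5)) //; lia.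
Qed.

Lemma Gc012 j : j <= 2 -> Gc j + h22 = h21.
Proof.
move=> j2; have := gap3 (Ts [:: 6]) (j:=j) (i:=5) ltac:(lia).
rewrite !FQ' (F22 (a:=j) (c:=5)) ?(F12 (a:=j) (c:=5)) //; try lia.
rewrite (F0 (s := [:: j; 4; 5] ++ [:: 6]) (i:=j) (j:=4) (k:=6)) //; try lia;
  rewrite ?inE ?eqxx ?orbT //.
rewrite (F0 (s := [:: j; j.+1; 4; 5] ++ [:: 6]) (i:=j) (j:=4) (k:=6)) //; try lia;
  rewrite ?inE ?eqxx ?orbT //.
rewrite /Gc; lia.
Qed.

Lemma card_split0 (Q : {set U}) (b : pred U) :
  #|Q| = #|[set u in Q | b u]| + #|[set u in Q | ~~ b u]|.
Proof.
rewrite -(cardsID [set u | b u] Q); congr (_ + _); apply: eq_card => u;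
by rewrite !inE; case: (u \in Q); case: (b u).
Qed.

Definition s1 := #|[set u in Ts [:: 5] | none u 0 5 && none u 6 m]|.
Definition R k := #|[set u in [set u in Ts [:: 5] | none u 0 5] | inT u k && none u 6 k]|.
Definition Yk k := #|[set u in Ts [:: 4] | all (inT u) [:: 5; k] && none u 6 k]|.

Lemma M5_sum : M 5 = s1 + \sum_(6 <= k < m) R k.
Proof.
have := part_right [set u in Ts [:: 5] | none u 0 5] (lo:=6) (t:=m) ltac:(lia).
rewrite /M => ->; congr (_ + _).
by apply: eq_card => u; rewrite !inE /=; bcase.
Qed.

Lemma R6 : R 6 = E.
Proof.
apply: eq_card => u; have h66 : none u 6 6 by apply: none_nil.
by rewrite !inE h66 /=; bcase.
Qed.

Lemma RY k : 7 <= k -> R k + Yk k = G0 5 k.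
Proof.
move=> k7; rewrite /G0 (card_split _ _ (inT^~ 4)) addnC; congr (_ + _);
  apply: eq_card => u; rewrite !inE /=.
all: case u5: (inT u 5); case uk: (inT u k); rewrite ?andbF ?andbT //=.
all: by rewrite ?(noprev5 (k:=k)) //; bcase.
Qed.

Lemma Y7 : Yk 7 + h4 = h21.
Proof.
have := gap2 (Ts [:: 4]) 5.
rewrite !FQ (F4 (a:=4) ltac:(lia)) (F21 (a:=4) (c:=7) ltac:(lia) ltac:(lia)) /Yk; lia.
Qed.

Lemma Y8 k : 7 <= k -> k.+1 < m -> Yk k.+1 + h22 = h21.
Proof.
move=> k7 km; have := gap3 (Ts [:: 4]) (j:=5) (i:=k.+1) ltac:(lia).
rewrite !FQ (F22 (a:=4) (c:=k) ltac:(lia) ltac:(lia)) (F21 (a:=4) (c:=k.+1) ltac:(lia) ltac:(lia)).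
have z1 : F ([:: 4] ++ [:: 5; 6; k.+1]) = 0.
  by apply: (F0 (i:=4) (j:=6) (k:=k.+1)); rewrite ?inE ?eqxx ?orbT //; lia.
have z2 : F ([:: 4] ++ [:: 5; 6; k; k.+1]) = 0.
  by apply: (F0 (i:=4) (j:=6) (k:=k.+1)); rewrite ?inE ?eqxx ?orbT //; lia.
rewrite z1 z2 /Yk; lia.
Qed.

Lemma M5_val : M 5 = s1 + E + R 7 + R 8 + (m - 9) * R 9.
Proof.
rewrite M5_sum.
rewrite big_ltn; last by lia.
rewrite big_ltn; last by lia.
rewrite big_ltn; last by lia.
rewrite R6 (eq_big_nat _ _ (F2 := fun => R 9)); last first.
  move=> k /andP[k9 km].
  have e1 := RY (k := k) ltac:(lia). have e2 := RY (k := 9) ltac:(lia).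
  have e3 : Yk k + h22 = h21.
    have -> : k = k.-1.+1 by lia.
    apply: Y8; lia.
  have e4 : Yk 9 + h22 = h21 by apply: Y8; lia.
  have e5 : G0 5 k + 2 * h21 = h11 + h22.
    have -> : k = k.-1.+1 by lia.
    apply: G0_4; lia.
  have e6 : G0 5 9 + 2 * h21 = h11 + h22 by apply: G0_4; lia.
  lia.
rewrite sum_nat_const_nat.
move: (R 9) => r; move: (m - 9) => z; lia.
Qed.

Lemma R7 : R 7 + Yk 7 = a.
Proof. rewrite RY //; have := G0_2 (j:=5) ltac:(lia); have := a_val; lia. Qed.

Lemma R8 : R 8 + Yk 8 = b.
Proof. rewrite RY //; have := G0_3 (j:=5) ltac:(lia); have := b_val; lia. Qed.

Lemma R9 : R 9 + Yk 9 = w.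
Proof. rewrite RY //; have := G0_4 (j:=5) (k:=8) ltac:(lia) ltac:(lia); have := w_val; lia. Qed.

Definition s2 := #|[set u in Ts [:: 5; 6] | none u 0 5 && none u 7 m]|.
Definition Z k := #|[set u in [set u in Ts [:: 5; 6] | none u 0 5] | inT u k && none u 7 k]|.

Lemma E_sum2 : E = s2 + \sum_(7 <= k < m) Z k.
Proof.
have := part_right [set u in Ts [:: 5; 6] | none u 0 5] (lo:=7) (t:=m) ltac:(lia).
rewrite /E => ->; congr (_ + _).
by apply: eq_card => u; rewrite !inE /=; bcase.
Qed.

Lemma Z7 : Z 7 + h4 = h3.
Proof.
rewrite -(F3 (a:=5) ltac:(lia)) -(F4 (a:=4) ltac:(lia)) /P1.F (card_split0 (Ts [:: 5; 6; 7]) (inT^~ 4)) [RHS]addnC.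
congr (_ + _); apply: eq_card => u; have h77 : none u 7 7 by apply: none_nil.
- rewrite !inE h77 /=.
  case u5: (inT u 5); case u7: (inT u 7); rewrite ?andbF ?andbT //=.
  by rewrite (noprev5 (k:=7)) //; bcase.
- by rewrite !inE /=; bcase.
Qed.

Lemma Zk_eq k : 8 <= k -> Z k = #|[set u in Ts [:: 5] | all (inT u) [:: 6; k] && none u 7 k]|.
Proof.
move=> k8; apply: eq_card => u; rewrite !inE /=.
case u6: (inT u 6); case uk: (inT u k); rewrite ?andbF ?andbT //=.
by rewrite (noprev_auto (k:=k)) //; bcase.
Qed.

Lemma Z8 : Z 8 + h4 = h21.
Proof.
have := gap2 (Ts [:: 5]) 6.
rewrite !FQ (F4 (a:=5) ltac:(lia)) (F21 (a:=5) (c:=8) ltac:(lia) ltac:(lia)) (Zk_eq (k:=8)) //; lia.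
Qed.

Lemma Z9 k : 8 <= k -> k.+1 < m -> Z k.+1 + h22 = h21.
Proof.
move=> k8 km; have := gap3 (Ts [:: 5]) (j:=6) (i:=k.+1) ltac:(lia).
rewrite !FQ (F22 (a:=5) (c:=k) ltac:(lia) ltac:(lia)) (F21 (a:=5) (c:=k.+1) ltac:(lia) ltac:(lia)).
have z1 : F ([:: 5] ++ [:: 6; 7; k.+1]) = 0.
  by apply: (F0 (i:=5) (j:=7) (k:=k.+1)); rewrite ?inE ?eqxx ?orbT //; lia.
have z2 : F ([:: 5] ++ [:: 6; 7; k; k.+1]) = 0.
  by apply: (F0 (i:=5) (j:=7) (k:=k.+1)); rewrite ?inE ?eqxx ?orbT //; lia.
rewrite z1 z2 (Zk_eq (k:=k.+1)); last by lia.
lia.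
Qed.

Lemma E_val : E = s2 + Z 7 + Z 8 + (m - 9) * Z 9.
Proof.
rewrite E_sum2.
rewrite big_ltn; last by lia.
rewrite big_ltn; last by lia.
rewrite (eq_big_nat _ _ (F2 := fun => Z 9)); last first.
  move=> k /andP[k9 km].
  have e1 : Z k + h22 = h21.
    have -> : k = k.-1.+1 by lia.
    apply: Z9; lia.
  have e2 : Z 9 + h22 = h21 by apply: Z9; lia.
  lia.
rewrite sum_nat_const_nat.
move: (Z 9) => r; move: (m - 9) => z; lia.
Qed.

Lemma q_le : 2 * h22 <= h21.
Proof.
rewrite -(F21 (a:=0) (c:=5) ltac:(lia) ltac:(lia)).
have e1 := F22 (a:=0) (c:=4) ltac:(lia) ltac:(lia).
have e2 := F22 (a:=0) (c:=5) ltac:(lia) ltac:(lia).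
rewrite mul2n -addnn -{1}e1 -e2 /P1.F.
have dis : Ts [:: 0; 1; 4; 5] :&: Ts [:: 0; 1; 5; 6] = set0.
  apply/setP => u; rewrite !inE /=; apply/negbTE/negP.
  move=> /andP[/and4P[_ u1 u4 _] /and4P[_ _ _ /andP[u6 _]]].
  by apply: (alpha (u:=u) (i:=1) (j:=4) (k:=6)).
have := cardsU (Ts [:: 0; 1; 4; 5]) (Ts [:: 0; 1; 5; 6]); rewrite dis cards0 subn0 => <-.
apply: subset_leq_card; apply/subsetP => u; rewrite !inE /= => /orP[].
- by case/and4P => -> -> _ /andP[-> _].
- by case/and4P => -> -> -> _.
Qed.

Lemma assembly : NatAlgStmt -> FinStmt -> (forall u : U, exists i : 'I_m, u \in A i) -> #|U| < m * (m - 2) ->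
  exists a b c d : nat,
    #|U| = a * m + b * m.+1 + c * 'C(m, 2) + d * ((m.+1 * (m - 2)) %/ 2).
Proof.
move=> NA FI cov hn.
have hN := n_val cov.
have hg0 : M (m - 1) + (h2 + a + b + (m - 4) * w) = h1.
  have e := PS_val (t := m - 1) ltac:(lia) ltac:(lia).
  rewrite (_ : m - 1 - 3 = m - 4) in e; last by lia.
  by rewrite -e; apply: M_PS; lia.
have hM5 : M 5 + (h2 + a + b + 2 * w) = h1.
  have e := PS_val (t := 5) ltac:(lia) ltac:(lia).
  by rewrite -e; apply: M_PS; lia.
have hE : E + (h3 + Gc 3 + 3 * Gc 0) = h2.
  have := E_sum; rewrite Gc4.
  have := Gc3; have := Gc012 (j:=0) ltac:(lia); have := Gc012 (j:=1) ltac:(lia);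
  have := Gc012 (j:=2) ltac:(lia).
  move: (Gc 0) (Gc 1) (Gc 2) (Gc 3) => x0 x1 x2 x3; lia.
have hq := q_le.
have hC2 : 'C(m, 2) + 'C(m, 2) = m * (m - 1) by rewrite addnn -mul2n C2x.
have hC3 : 'C(m - 3, 2) + 'C(m - 3, 2) = (m - 3) * (m - 4).
  by rewrite addnn -mul2n C2x (_ : m - 3 - 1 = m - 4) //; lia.
have hR9 : R 9 + Yk 8 = w.
  have := R9; have := Y8 (k:=7) ltac:(lia) ltac:(lia); have := Y8 (k:=8) ltac:(lia) ltac:(lia).
  move: (R 9) (Yk 8) (Yk 9) => x y z; lia.
have [F1 F2] := NA m (m-1) (m-2) (m-3) (m-4) (m-9) (m+1) (2*m) (2*m+1) 'C(m,2) 'C(m-3,2) #|U|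
  h1 h2 h11 h3 h21 h4 h22 a b w (M (m-1)) (M 5) s1 s2 E (Gc 3) (Gc 0)
  (R 7) (R 8) (R 9) (Yk 7) (Yk 8) (Z 7) (Z 8) (Z 9) (h21 - 2 * h22)
  ltac:(lia) erefl erefl erefl erefl erefl erefl erefl erefl hC2 hC3
  a_val b_val w_val hN hg0 hM5 hE Gc3 (Gc012 (j:=0) ltac:(lia)) M5_val R7 Y7 R8
  (Y8 (k:=7) ltac:(lia) ltac:(lia)) hR9 E_val Z7 Z8 (Z9 (k:=8) ltac:(lia) ltac:(lia))
  ltac:(lia).
exact: (FI _ _ _ _ _ _ _ _ m51 hn F1 F2).
Qed.

End Main.

End P5.
Import P5.

From mathcomp Require Import all_algebra ring.

Module Fin.
Lemma fin (m n s1 s2 w q y g0 : nat) : 51 <= m -> n < m * (m - 2) ->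
  n + (m+1) * w = m * s1 + (m+1) * s2 + 'C(m, 2) * w + 2 * m * q + (2 * m+1) * y ->
  g0 + w = s1 + s2 + q + y ->
  exists a b c d : nat,
    n = a * m + b * m.+1 + c * 'C(m, 2) + d * ((m.+1 * (m - 2)) %/ 2).
Proof.
move=> hm hn e1 e2.
have hX : 2 * 'C(m, 2) = m * (m - 1).
  elim: (m) => // k IH; rewrite binS bin1 mulnDr IH; case: k {IH} => //= k; nia.
have hD : (m.+1 * (m - 2)) %/ 2 = 'C(m, 2) - 1.
  have -> : m.+1 * (m - 2) = 2 * ('C(m, 2) - 1) by nia.
  by rewrite mulKn.
rewrite hD.
have [X' eX] : exists X', 'C(m, 2) = X'.+1.
  by exists ('C(m, 2)).-1; rewrite prednK // bin_gt0; lia.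
rewrite eX in e1 hX *; rewrite subn1 /=.
have [w0|w1] := leqP w 0.
  have w0e : w = 0 by lia.
  rewrite w0e in e1 e2.
  exists (s1 + 2 * q + y), (s2 + y), 0, 0.
  rewrite !muln0 !addn0 in e1; rewrite e1. ring.
have [w1'|w2] := leqP w 1.
  have w1e : w = 1 by lia.
  rewrite w1e in e1 e2.
  have [sy|sy] := leqP 1 (s2 + y).
    have [k ek] : exists k, s2 + y = k.+1 by exists (s2 + y).-1; rewrite prednK.
    exists (s1 + 2 * q + y), k, 1, 0.
    have e3 : n + (m + 1) = m * (s1 + 2 * q + y) + (m+1) * (s2 + y) + X'.+1.
      by move: e1; rewrite !muln1 => ->; ring.
    rewrite ek in e3. apply: (@addIn (m + 1)); rewrite e3; ring.
  have s20 : s2 = 0 by lia.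
  have y0 : y = 0 by lia.
  rewrite s20 y0 in e1 e2.
  have [k ek] : exists k, s1 + 2 * q = k.+1 by exists (s1 + 2 * q).-1; rewrite prednK //; lia.
  exists k, 0, 0, 1.
  have e3 : n + (m + 1) = m * (s1 + 2 * q) + X'.+1 by move: e1; rewrite !muln1 => ->; ring.
  rewrite ek in e3. apply: (@addIn (m + 1)); rewrite e3; ring.
exfalso.
have hs : w <= s1 + s2 + q + y by lia.
have h1 : m * w <= m * (s1 + s2 + q + y) by rewrite leq_mul2l hs orbT.
have h3 : X' * 2 <= X' * w by rewrite leq_mul2l w2 orbT.
have hm2 : m * (m - 2) + m = m * (m - 1).
  have -> : m - 1 = (m - 2).+1 by lia.
  by rewrite mulnS addnC.
lia.
Qed.

End Fin.

Module Alg.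
Import GRing.Theory.
Import GRing.Theory.
Set Implicit Arguments.
Local Open Scope ring_scope.
Lemma algI (m k1 k2 k3 k4 k9 kp1 k2m k2m1 C2 C3 n h1 h2 h11 h3 h21 h4 h22 a b w g0 M5 s1 s2 E X2 X3 R2 R3 R4 Y2 Y3 Z1 Z2 Z3 q : int) :
  k1 = m - 1 -> k2 = m - 2 -> k3 = m - 3 -> k4 = m - 4 -> k9 = m - 9 ->
  kp1 = m + 1 -> k2m = 2 * m -> k2m1 = 2 * m + 1 ->
  C2 + C2 = m * k1 -> C3 + C3 = k3 * k4 ->
  a + h3 = h11 -> b + 2 * h21 = h11 + h4 -> w + 2 * h21 = h11 + h22 ->
  n + (k1 * h2 + k2 * a + k3 * b + C3 * w) = m * h1 ->
  g0 + (h2 + a + b + k4 * w) = h1 ->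
  M5 + (h2 + a + b + 2 * w) = h1 ->
  E + (h3 + X2 + 3 * X3) = h2 -> X2 + h4 = h21 -> X3 + h22 = h21 ->
  M5 = s1 + E + R2 + R3 + k9 * R4 -> R2 + Y2 = a -> Y2 + h4 = h21 -> R3 + Y3 = b -> Y3 + h22 = h21 ->
  R4 + Y3 = w ->
  E = s2 + Z1 + Z2 + k9 * Z3 -> Z1 + h4 = h3 -> Z2 + h4 = h21 -> Z3 + h22 = h21 ->
  q + 2 * h22 = h21 ->
  n + kp1 * w = m * s1 + kp1 * s2 + C2 * w + k2m * q + k2m1 * h22
  /\ g0 + w = s1 + s2 + q + h22.
Proof.
move=> e1 e2 e3 e4 e9 ep1 e2m e2m1 HC2 HC3 Ha Hb Hw Hn Hg0 HM5 HE HX2 HX3 HS1 HR2 HY2 HR3 HY3 HR4 HS2 HZ1 HZ2 HZ3 Hq.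
have en : n + n = (m * h1 + m * h1) - ((k1 * h2 + k2 * a + k3 * b) + (k1 * h2 + k2 * a + k3 * b)) - k3 * k4 * w.
  rewrite -HC3 -Hn; ring.
have ea : a = h11 - h3 by rewrite -Ha; ring.
have eb : b = h11 + h4 - 2 * h21 by rewrite -Hb; ring.
have ew : w = h11 + h22 - 2 * h21 by rewrite -Hw; ring.
have eg0 : g0 = h1 - (h2 + a + b + k4 * w) by rewrite -Hg0; ring.
have eM5 : M5 = h1 - (h2 + a + b + 2 * w) by rewrite -HM5; ring.
have eX2 : X2 = h21 - h4 by rewrite -HX2; ring.
have eX3 : X3 = h21 - h22 by rewrite -HX3; ring.
have eE : E = h2 - (h3 + X2 + 3 * X3) by rewrite -HE; ring.
have es1 : s1 = M5 - (E + R2 + R3 + k9 * R4) by rewrite HS1; ring.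
have eY2 : Y2 = h21 - h4 by rewrite -HY2; ring.
have eY3 : Y3 = h21 - h22 by rewrite -HY3; ring.
have eR2 : R2 = a - Y2 by rewrite -HR2; ring.
have eR3 : R3 = b - Y3 by rewrite -HR3; ring.
have eR4 : R4 = w - Y3 by rewrite -HR4; ring.
have es2 : s2 = E - (Z1 + Z2 + k9 * Z3) by rewrite HS2; ring.
have eZ1 : Z1 = h3 - h4 by rewrite -HZ1; ring.
have eZ2 : Z2 = h21 - h4 by rewrite -HZ2; ring.
have eZ3 : Z3 = h21 - h22 by rewrite -HZ3; ring.
have eq : q = h21 - 2 * h22 by rewrite -Hq; ring.
split.
  have H2 : (n + kp1 * w) + (n + kp1 * w) =
            (m * s1 + kp1 * s2 + k2m * q + k2m1 * h22) + (m * s1 + kp1 * s2 + k2m * q + k2m1 * h22)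
            + (C2 + C2) * w.
    rewrite HC2 (addrACA n) en es1 es2 eM5 eE eR2 eR3 eR4 eY2 eY3 eX2 eX3 eZ1 eZ2 eZ3 eq.
    rewrite e1 e2 e3 e4 e9 ep1 e2m e2m1 ea eb ew. ring.
  move: H2; rewrite mulrDl; lia.
rewrite eg0 es1 es2 eM5 eE eR2 eR3 eR4 eY2 eY3 eX2 eX3 eZ1 eZ2 eZ3 eq e4 e9 ea eb ew. ring.
Qed.

Lemma natAlg (m k1 k2 k3 k4 k9 kp1 k2m k2m1 C2 C3 n h1 h2 h11 h3 h21 h4 h22 a b w g0 M5 s1 s2 E X2 X3 R2 R3 R4 Y2 Y3 Z1 Z2 Z3 q : nat) :
  (9 <= m)%N ->
  k1 = (m - 1)%N -> k2 = (m - 2)%N -> k3 = (m - 3)%N -> k4 = (m - 4)%N -> k9 = (m - 9)%N ->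
  kp1 = (m + 1)%N -> k2m = (2 * m)%N -> k2m1 = (2 * m + 1)%N ->
  (C2 + C2 = m * k1)%N -> (C3 + C3 = k3 * k4)%N ->
  (a + h3 = h11)%N -> (b + 2 * h21 = h11 + h4)%N -> (w + 2 * h21 = h11 + h22)%N ->
  (n + (k1 * h2 + k2 * a + k3 * b + C3 * w) = m * h1)%N ->
  (g0 + (h2 + a + b + k4 * w) = h1)%N ->
  (M5 + (h2 + a + b + 2 * w) = h1)%N ->
  (E + (h3 + X2 + 3 * X3) = h2)%N -> (X2 + h4 = h21)%N -> (X3 + h22 = h21)%N ->
  (M5 = s1 + E + R2 + R3 + k9 * R4)%N -> (R2 + Y2 = a)%N -> (Y2 + h4 = h21)%N -> (R3 + Y3 = b)%N -> (Y3 + h22 = h21)%N ->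
  (R4 + Y3 = w)%N ->
  (E = s2 + Z1 + Z2 + k9 * Z3)%N -> (Z1 + h4 = h3)%N -> (Z2 + h4 = h21)%N -> (Z3 + h22 = h21)%N ->
  (q + 2 * h22 = h21)%N ->
  (n + kp1 * w = m * s1 + kp1 * s2 + C2 * w + k2m * q + k2m1 * h22)%N
  /\ (g0 + w = s1 + s2 + q + h22)%N.
Proof.
move=> m9 e1 e2 e3 e4 e9 ep1 e2m e2m1 HC2 HC3 Ha Hb Hw Hn Hg0 HM5 HE HX2 HX3 HS1 HR2 HY2 HR3 HY3 HR4 HS2 HZ1 HZ2 HZ3 Hq.
have i1 : (k1:int) = (m:int) - 1 by lia.
have i2 : (k2:int) = (m:int) - 2 by lia.
have i3 : (k3:int) = (m:int) - 3 by lia.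
have i4 : (k4:int) = (m:int) - 4 by lia.
have i9 : (k9:int) = (m:int) - 9 by lia.
have ip1 : (kp1:int) = (m:int) + 1 by lia.
have i2m : (k2m:int) = 2 * (m:int) by lia.
have i2m1 : (k2m1:int) = 2 * (m:int) + 1 by lia.
have iC2 := congr1 Posz HC2; rewrite !PoszD !PoszM in iC2.
have iC3 := congr1 Posz HC3; rewrite !PoszD !PoszM in iC3.
have ia : (a:int) + h3 = h11 by lia.
have ib : (b:int) + 2 * (h21:int) = (h11:int) + h4 by lia.
have iw : (w:int) + 2 * (h21:int) = (h11:int) + h22 by lia.
have iN := congr1 Posz Hn; rewrite !PoszD !PoszM in iN.
have ig0 := congr1 Posz Hg0; rewrite !PoszD !PoszM in ig0.
have iM5 : (M5:int) + ((h2:int) + a + b + 2 * (w:int)) = h1 by lia.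
have iE : (E:int) + ((h3:int) + X2 + 3 * (X3:int)) = h2 by lia.
have iX2 : (X2:int) + h4 = h21 by lia.
have iX3 : (X3:int) + h22 = h21 by lia.
have iS1 := congr1 Posz HS1; rewrite !PoszD !PoszM in iS1.
have iR2 : (R2:int) + Y2 = a by lia.
have iY2 : (Y2:int) + h4 = h21 by lia.
have iR3 : (R3:int) + Y3 = b by lia.
have iY3 : (Y3:int) + h22 = h21 by lia.
have iR4 : (R4:int) + Y3 = w by lia.
have iS2 := congr1 Posz HS2; rewrite !PoszD !PoszM in iS2.
have iZ1 : (Z1:int) + h4 = h3 by lia.
have iZ2 : (Z2:int) + h4 = h21 by lia.
have iZ3 : (Z3:int) + h22 = h21 by lia.
have iq : (q:int) + 2 * (h22:int) = h21 by lia.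
have [r1 r2] := @algI _ _ _ _ _ _ _ _ _ _ _ _ _ _ _ _ _ _ _ _ _ _ _ _ _ _ _ _ _ _ _ _ _ _ _ _ _ _ i1 i2 i3 i4 i9 ip1 i2m i2m1 iC2 iC3 ia ib iw iN ig0 iM5 iE iX2 iX3 iS1 iR2 iY2 iR3 iY3 iR4 iS2 iZ1 iZ2 iZ3 iq.
split; apply/eqP; rewrite -eqz_nat !PoszD ?PoszM; apply/eqP; [exact: r1 | exact: r2].
Qed.

End Alg.

Unset Implicit Arguments.

Theorem lemma4p26 (U : finType) (m : nat) (A : 'I_m -> {set U}) :
  complete A -> harmonic A ->
  #|U| < m * (m - 2) -> 51 <= m ->
  (forall I : {set 'I_m}, nonconsecutive I -> #|I| = 3 -> HI A I = set0) ->
  exists a b c d : nat,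
    #|U| = a * m + b * m.+1 + c * 'C(m, 2) + d * ((m.+1 * (m - 2)) %/ 2).
Proof.
move=> cA harm hn m51 nc3.
apply: (P5.assembly harm nc3 m51 Alg.natAlg Fin.fin) => // u.
have : u \in \bigcup_(i < m) A i by rewrite cA inE.
by case/bigcupP => i _ ui; exists i.
Qed.
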